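(* Let $h>0$ be fixed, let $d=2$, and let $\{z_j\}_{j\ge 1}\subset\mathbb{R}$ be an observed scalar time series. Assume there exist a matrix $B^*\in\mathbb{R}^{2\times 2}$ and a (hidden) scalar series $\{z_j^{*\dagger}\}_{j\ge1}\subset\mathbb{R}$ such that, writing $\boldsymbol x^{*\ddagger}_j=(z_j,z_j^{*\dagger})^{\top}$, the underlying true linear dynamics $\boldsymbol x^{*\ddagger}_{j+1}=B^*\boldsymbol x^{*\ddagger}_j$ hold for all $j=1,2,\ldots$. Given $n$ observations $z_1,\dots,z_n$, let $(\hat B,\{\hat z^{\dagger}_j\}_{j=1}^n)$ be any minimizer, over $B\in\mathbb{R}^{2\times2}$ and $\{z_j^{\dagger}\}_{j=1}^n\subset\mathbb{R}$, of the ARS loss $$\ell(B,\{z^{\dagger}_j\}_{j=1}^n)=\sum_{j=1}^{n-1}\big\|\boldsymbol x^{\ddagger}_{j+1}-B\boldsymbol x^{\ddagger}_j\big\|_2^2,\qquad \boldsymbol x^{\ddagger}_j=(z_j,z_j^{\dagger})^{\top},$$ and set $\hat{\boldsymbol x}^{\ddagger}_n=(z_n,\hat z^{\dagger}_n)^{\top}$. Then, for sufficiently large $n$, the ARS prediction $\hat z_{n+k}=(1,0)\hat B^k\hat{\boldsymbol x}^{\ddagger}_n$ coincides with the true value $z_{n+k}$ for every $k\in\mathbb{N}$.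
   Context: This is the autoregressive with slack time series (ARS) model in the case of a 2-dimensional state with one observed coordinate ($r=1$) and one missing coordinate ($s=1$): the missing coordinate is replaced by a slack time series $\{z_j^{\dagger}\}$ that is estimated jointly with the AR(1) transition matrix $B$ by minimizing the loss above. Here $z_j$ denotes the observation at time $jh$. *)

(* Defs.v *)
From HB Require Import structures.
From mathcomp Require Import all_boot all_order all_algebra.
From mathcomp Require Import reals.
Set Implicit Arguments. Unset Strict Implicit. Unset Printing Implicit Defensive.
Import Order.TTheory GRing.Theory Num.Theory.
Local Open Scope ring_scope.

(* Time index j >= 1 is represented by the natural number j; the value at
   index 0 is irrelevant (never used). *)

Definition xdd (R : realType) (z zd : nat -> R) (j : nat) : 'cV[R]_2 :=
  \col_(i < 2) (if (i == 0 :> nat) then z j else zd j).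

Definition sqnorm2 (R : realType) (v : 'cV[R]_2) : R :=
  \sum_(i < 2) (v i ord0) ^+ 2.

Definition ars_loss (R : realType) (n : nat) (z : nat -> R)
    (B : 'M[R]_2) (zd : nat -> R) : R :=
  \sum_(1 <= j < n) sqnorm2 (xdd z zd j.+1 - B *m xdd z zd j).

(* (Bhat, zdhat) minimizes the ARS loss over all B and all slack series
   (only the values zd_1..zd_n enter the loss). *)
Definition is_ars_minimizer (R : realType) (n : nat) (z : nat -> R)
    (Bhat : 'M[R]_2) (zdhat : nat -> R) : Prop :=
  forall (B : 'M[R]_2) (zd : nat -> R),
    ars_loss n z Bhat zdhat <= ars_loss n z B zd.

Definition e1row (R : realType) : 'rV[R]_2 :=
  \row_(i < 2) (if (i == 0 :> nat) then 1 else 0).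

Definition ars_pred (R : realType) (z : nat -> R) (Bhat : 'M[R]_2)
    (zdhat : nat -> R) (n k : nat) : R :=
  (e1row R *m (Bhat ^+ k) *m xdd z zdhat n) ord0 ord0.

(* Main.v *)
Require Import Defs.
From HB Require Import structures.
From mathcomp Require Import all_boot all_order all_algebra.
From mathcomp Require Import reals.
From mathcomp Require Import ring.
Import Order.TTheory GRing.Theory Num.Theory.
Local Open Scope ring_scope.

Lemma sum2E (R : realType) (F : 'I_2 -> R) :
  \sum_(i < 2) F i = F ord0 + F (lift ord0 ord0).
Proof. by rewrite !big_ord_recl big_ord0 addr0. Qed.

Lemma e1_xdd (R : realType) (z zd : nat -> R) j :
  (e1row R *m xdd z zd j) ord0 ord0 = z j.
Proof. by rewrite !mxE sum2E !mxE /= mul1r mul0r addr0. Qed.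

Lemma CH2 (R : realType) (A : 'M[R]_2) :
  A *m A = (A ord0 ord0 + A (lift ord0 ord0) (lift ord0 ord0)) *: A
   - (A ord0 ord0 * A (lift ord0 ord0) (lift ord0 ord0)
      - A ord0 (lift ord0 ord0) * A (lift ord0 ord0) ord0)%:M.
Proof.
apply/matrixP => i j; rewrite !mxE sum2E.
case: i => [[|[|//]] Hi]; case: j => [[|[|//]] Hj];
 rewrite ?mxE /=;
 (have -> : Ordinal Hi = ord0 by apply/val_inj) ||
 (have -> : Ordinal Hi = lift ord0 ord0 by apply/val_inj);
 (have -> : Ordinal Hj = ord0 by apply/val_inj) ||
 (have -> : Ordinal Hj = lift ord0 ord0 by apply/val_inj); rewrite /=; ring.
Qed.

Definition fseq (R : realType) (A : 'M[R]_2) (x : 'cV[R]_2) (m : nat) : R :=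
  (e1row R *m A ^+ m *m x) ord0 ord0.

Arguments fseq {R}.

Lemma fseq_rec (R : realType) (A : 'M[R]_2) x m :
  fseq A x m.+2 = (A ord0 ord0 + A (lift ord0 ord0) (lift ord0 ord0)) * fseq A x m.+1
   - (A ord0 ord0 * A (lift ord0 ord0) (lift ord0 ord0)
      - A ord0 (lift ord0 ord0) * A (lift ord0 ord0) ord0) * fseq A x m.
Proof.
rewrite /fseq !exprSr -mulrA.
have -> : A * A = A *m A by [].
rewrite CH2.
have -> : forall B C : 'M[R]_2, B * C = B *m C by [].
rewrite mulmxBr ?(mulmxDr, mulmxN, mulmxDl, mulNmx) mul_mx_scalar -!scalemxAr -!scalemxAl.
by rewrite [in LHS]mxE !mxE.
Qed.

Lemma rec_zero (R : realType) (u : nat -> R) a b :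
  (forall m, u m.+2 = a * u m.+1 + b * u m) -> u 0%N = 0 -> u 1%N = 0 ->
  forall m, u m = 0.
Proof.
move=> H h0 h1.
have: forall m, u m = 0 /\ u m.+1 = 0.
  elim=> [|m [IH1 IH2]]; first by [].
  by split=> //; rewrite H IH1 IH2 !mulr0 addr0.
by move=> K m; case: (K m).
Qed.

Theorem proposition1 (R : realType) (h : R) (hpos : 0 < h)
  (z : nat -> R) (Bstar : 'M[R]_2) (zdstar : nat -> R)
  (Htrue : forall j : nat, (1 <= j)%N ->
     xdd z zdstar j.+1 = Bstar *m xdd z zdstar j) :
  exists N : nat, forall n : nat, (N <= n)%N ->
    forall (Bhat : 'M[R]_2) (zdhat : nat -> R),
      is_ars_minimizer n z Bhat zdhat ->
      forall k : nat, ars_pred z Bhat zdhat n k = z (n + k)%N.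
Proof.
exists 4%N => n Hn Bhat zdhat Hmin k.
set x := xdd z zdstar; set xh := xdd z zdhat.
have Xs : forall j, x j.+1 = Bstar ^+ j *m x 1%N.
  elim=> [|j IH]; first by rewrite expr0 mul1mx.
  by rewrite /x Htrue // -/x IH exprS mulmxA.
have L0 : ars_loss n z Bstar zdstar = 0.
  rewrite /ars_loss big_nat_cond big1 // => j /andP[/andP[Hj _] _].
  rewrite Htrue // subrr /sqnorm2 big1 // => i _.
  by rewrite mxE expr0n.
have Lge : forall B zd, 0 <= ars_loss n z B zd.
  move=> B zd; apply: sumr_ge0 => j _; apply: sumr_ge0 => i _; exact: sqr_ge0.
have Lh : ars_loss n z Bhat zdhat = 0.
  by apply/le_anti; rewrite Lge andbT -L0; apply: Hmin.
have Th : forall j, (1 <= j < n)%N -> xh j.+1 = Bhat *m xh j.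
  move: Lh; rewrite /ars_loss => /eqP; rewrite psumr_eq0; last first.
    move=> j _; apply: sumr_ge0 => i _; exact: sqr_ge0.
  move=> /allP H j Hj.
  have := H j; rewrite mem_index_iota Hj => /(_ isT) /eqP.
  rewrite /sqnorm2 => /psumr_eq0P Hi.
  apply/eqP; rewrite -subr_eq0; apply/eqP/matrixP => i jj.
  rewrite [RHS]mxE (ord1 jj); apply/eqP; rewrite -sqrf_eq0; apply/eqP.
  apply: Hi => //= l _; exact: sqr_ge0.
have Xh : forall j, (j < n)%N -> xh j.+1 = Bhat ^+ j *m xh 1%N.
  elim=> [|j IH] Hj; first by rewrite expr0 mul1mx.
  have Hj' : (1 <= j.+1 < n)%N by rewrite Hj.
  by rewrite Th // IH ?(ltnW Hj) // exprS mulmxA.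
pose a m := fseq Bstar (x 1%N) m.
pose b m := fseq Bhat (xh 1%N) m.
have Ha : forall m, a m = z m.+1.
  by move=> m; rewrite /a /fseq -mulmxA -Xs e1_xdd.
have Hb : forall m, (m < n)%N -> b m = z m.+1.
  by move=> m Hm; rewrite /b /fseq -mulmxA -Xh // e1_xdd.
pose t := Bstar ord0 ord0 + Bstar (lift ord0 ord0) (lift ord0 ord0).
pose d := Bstar ord0 ord0 * Bstar (lift ord0 ord0) (lift ord0 ord0) - Bstar ord0 (lift ord0 ord0) * Bstar (lift ord0 ord0) ord0.
pose t' := Bhat ord0 ord0 + Bhat (lift ord0 ord0) (lift ord0 ord0).
pose d' := Bhat ord0 ord0 * Bhat (lift ord0 ord0) (lift ord0 ord0) - Bhat ord0 (lift ord0 ord0) * Bhat (lift ord0 ord0) ord0.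
pose g m := b m.+2 - t * b m.+1 + d * b m.
have Hg : forall m, g m = 0.
  apply: (@rec_zero R g t' (- d')).
  - by move=> m; rewrite /g /b !(fseq_rec _ Bhat) -/t' -/d'; ring.
  - rewrite /g !Hb ?(leq_trans _ Hn) // -!Ha /a (fseq_rec _ Bstar) -/t -/d; ring.
  - rewrite /g !Hb ?(leq_trans _ Hn) // -!Ha /a (fseq_rec _ Bstar) -/t -/d; ring.
have Hab : forall m, b m - a m = 0.
  apply: (@rec_zero R (fun m => b m - a m) t (- d)).
  - move=> m; rewrite (_ : b m.+2 = t * b m.+1 - d * b m); last first.
      by apply/eqP; rewrite -subr_eq0 -(Hg m); apply/eqP; rewrite /g; ring.
    rewrite /a (fseq_rec _ Bstar) -/t -/d; ring.
  - by rewrite Hb ?(leq_trans _ Hn) // Ha subrr.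
  - by rewrite Hb ?(leq_trans _ Hn) // Ha subrr.
clear L0 Lge Lh Hmin Th Hg.
case: n Hn Xh Hb => [//|n'] Hn Xh Hb.
have := Hab (k + n')%N; move/eqP; rewrite subr_eq0 => /eqP.
rewrite Ha /b /fseq exprD.
have -> : Bhat ^+ k * Bhat ^+ n' = Bhat ^+ k *m Bhat ^+ n' by [].
rewrite mulmxA -mulmxA -Xh // addnC -addSn => <-.
by [].
Qed.
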